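(* Let $(\Omega,\Sigma,\mu)$ be a $\sigma$-finite atomless measure space and let $0<\alpha\le\infty$. Suppose that $u,v\in L_0(\mu)$ with $u,v\ge 0$ and $u\wedge v=0$ (i.e. $\min(u,v)=0$ a.e.), and suppose $f\in L_0(0,\infty)$, $f\ge 0$, is such that $$\int_0^t u^*(s)\,ds\le\int_0^t f^*(s)\,ds,\qquad \int_0^t v^*(s)\,ds\le\int_0^t f^*(s)\,ds,\qquad 0\le t<\alpha .$$ Then $$\int_0^t (u+v)^*(s)\,ds\le \int_0^t (D_2f^* )(s)\,ds,\qquad 0\le t<\alpha,$$ where $(D_2 g)(t)=g(t/2)$ for $t\ge 0$.
   Context: $L_0(\mu)$ denotes the space of (classes of) $\mu$-measurable real functions. For $f\in L_0(\mu)$, the distribution function is $d_{|f|}(s)=\mu(\{x:|f(x)|>s\})$, $s\ge0$, and the decreasing rearrangement is $f^*(t)=\inf\{s\ge 0: d_{|f|}(s)\le t\}$, $t\ge 0$. The space $(0,\infty)$ carries Lebesgue measure. *)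

(* Defs.v *)
From HB Require Import structures.
From mathcomp Require Import all_boot all_order all_algebra.
From mathcomp Require Import all_classical all_reals all_analysis.
Set Implicit Arguments. Unset Strict Implicit. Unset Printing Implicit Defensive.
Import Order.TTheory GRing.Theory Num.Theory.
Local Open Scope classical_set_scope.
Local Open Scope ring_scope.
Local Open Scope ereal_scope.

Definition distribution d (T : measurableType d) (R : realType)
  (mu : {measure set T -> \bar R}) (D : set T) (f : T -> R) (s : R) : \bar R :=
  mu (D `&` [set x | (s < `|f x|)%R]).

Definition rearrangement d (T : measurableType d) (R : realType)
  (mu : {measure set T -> \bar R}) (D : set T) (f : T -> R) (t : R) : \bar R :=
  ereal_inf [set s%:E | s in [set s : R | (0 <= s)%R /\ distribution mu D f s <= t%:E]].

Definition atomless d (T : measurableType d) (R : realType)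
  (mu : {measure set T -> \bar R}) : Prop :=
  forall A, measurable A -> 0 < mu A ->
    exists2 B, measurable B /\ B `<=` A & 0 < mu B < mu A.

(* Main.v *)
Require Import Defs.
From HB Require Import structures.
From mathcomp Require Import all_boot all_order all_algebra.
From mathcomp Require Import all_classical all_reals all_analysis.
From mathcomp Require Import measurable_realfun lra.
Import Order.TTheory GRing.Theory Num.Theory.
Local Open Scope classical_set_scope.
Local Open Scope ring_scope.
Local Open Scope ereal_scope.
Lemma real_split (R : realType) (t : R) (lu lv : R -> R) :
  (0 <= t)%R ->
  (forall s, 0 <= lu s <= t)%R -> (forall s, 0 <= lv s <= t)%R ->
  (forall a b, a <= b -> lu b <= lu a)%R -> (forall a b, a <= b -> lv b <= lv a)%R ->
  exists t1, (0 <= t1 <= t)%R /\ forall s,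
    (Num.min t (lu s + lv s) <= Num.min t1 (lu s) + Num.min (t - t1) (lv s))%R.
Proof.
move=> t0 hu hv niu niv.
pose S := fun s => (lu s + lv s <= t)%R.
have h1 s s' : S s -> ~ S s' -> (s' < s)%R.
  move=> Ss Ss'; rewrite ltNge; apply/negP => ss'; apply: Ss'.
  rewrite /S; apply: le_trans Ss; apply: lerD; [exact: niu|exact: niv].
pose E := [set x : R | x = 0%R \/ (exists s, S s /\ x = lu s) \/
                       (exists s, ~ S s /\ x = (t - lv s)%R)].
have E0 : E 0%R by left.
have ubE : forall b, (forall x, E x -> x <= b)%R -> (sup E <= b)%R.
  by move=> b hb; apply: ge_sup; [exists 0%R|].
have hsE : has_sup E.
  split; first by exists 0%R.
  exists t => x [->|[[s [_ ->]]|[s [_ ->]]]] //.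
  - by case/andP: (hu s).
  - by rewrite gerBl; case/andP: (hv s).
have inE x : E x -> (x <= sup E)%R by move=> Ex; exact: sup_upper_bound.
pose t1 := sup E.
have a0 : (0 <= t1)%R by exact: inE.
have hb s : S s -> (lu s <= t1)%R by move=> Ss; apply: inE; right; left; exists s.
have hc s : ~ S s -> (t - lv s <= t1)%R.
  by move=> Ss; apply: inE; right; right; exists s.
have hd : (t1 <= t)%R.
  apply: ubE => x [->|[[s [_ ->]]|[s [_ ->]]]] //.
  - by case/andP: (hu s).
  - by rewrite gerBl; case/andP: (hv s).
have he s' : ~ S s' -> (t1 <= lu s')%R.
  move=> Ss'; apply: ubE => x [->|[[s [Ss ->]]|[s [Ss ->]]]].
  - by case/andP: (hu s').
  - by apply: niu; apply: ltW; exact: h1 Ss Ss'.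
  - rewrite lerBlDr; have [ss'|s's] := leP s s'.
    + have : ~ S s' by [].
      move/negP; rewrite /S -ltNge => /ltW h; apply: le_trans h _.
      by apply: lerD => //; exact: niv.
    + have : ~ S s by [].
      move/negP; rewrite /S -ltNge => /ltW h; apply: le_trans h _.
      by apply: lerD => //; apply: niu; exact: ltW.
have hf s : S s -> (t1 <= t - lv s)%R.
  move=> Ss; apply: ubE => x [->|[[s' [Ss' ->]]|[s' [Ss' ->]]]].
  - by rewrite subr_ge0; case/andP: (hv s).
  - rewrite lerBrDr; have [ss'|s's] := leP s s'.
    + by apply: le_trans Ss; apply: lerD => //; exact: niu.
    + by apply: le_trans Ss'; apply: lerD => //; apply: niv; exact: ltW.
  - by rewrite lerB// niv// ltW// (h1 s s').
exists t1; split; first by rewrite a0 hd.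
move=> s; have [Ss|Ss] := pselect (S s).
- rewrite (@min_r _ _ t1 (lu s)) ?hb// (@min_r _ _ (t - t1)%R (lv s)).
    by rewrite ge_min lexx orbT.
  by rewrite lerBrDr addrC -lerBrDr hf.
- rewrite (@min_l _ _ t1 (lu s)) ?he// (@min_l _ _ (t - t1)%R (lv s)).
    by rewrite subrKC ge_min lexx.
  by rewrite lerBlDr addrC -lerBlDr hc.
Qed.
Definition Lvl {R : realType} (phi : R -> \bar R) (sg : R) : \bar R :=
  ereal_sup [set s%:E | s in [set s : R | (0 <= s)%R /\ (s = 0%R \/ sg%:E < phi s)]].

Definition nonincr {R : realType} (phi : R -> \bar R) :=
  forall a b : R, (a <= b)%R -> phi b <= phi a.

Section Lvl_props.
Context {R : realType} (phi : R -> \bar R).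

Lemma Lvl_ge0 sg : 0 <= Lvl phi sg.
Proof. by apply: ereal_sup_ubound; exists 0%R => //; split => //; left. Qed.

Lemma Lvl_ni sg1 sg2 : (sg1 <= sg2)%R -> Lvl phi sg2 <= Lvl phi sg1.
Proof.
move=> h; apply: ereal_sup_le => _ [s [s0 hs] <-]; exists s => //; split => //.
case: hs => [->|hs]; [by left|right].
by apply: le_lt_trans hs; rewrite lee_fin.
Qed.

Lemma Lvl_ub s sg : (0 <= s)%R -> sg%:E < phi s -> s%:E <= Lvl phi sg.
Proof. by move=> s0 h; apply: ereal_sup_ubound; exists s => //; split => //; right. Qed.

Lemma Lvl_lt s sg : nonincr phi -> (0 <= s)%R -> s%:E < Lvl phi sg -> sg%:E < phi s.
Proof.
move=> ni s0 /ereal_sup_gt[_ [y [y0 hy] <-]]; rewrite lte_fin => sy.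
case: hy => [y0'|hy]; first by move: sy; rewrite y0' ltNge s0.
by apply: lt_le_trans hy _; apply: ni; exact: ltW.
Qed.

Lemma Lvl_le s sg : (0 <= s)%R -> Lvl phi sg < s%:E -> phi s <= sg%:E.
Proof.
move=> s0 h; rewrite leNgt; apply/negP => h'.
by have := @Lvl_ub s sg s0 h'; rewrite leNgt h.
Qed.

End Lvl_props.

Lemma nonincr_measurable (R : realType) (phi : R -> \bar R) :
  nonincr phi -> measurable_fun [set: R] phi.
Proof.
move=> ni; apply: (measurability _ (ErealGenCInfty.measurableE R)) => //.
move=> /= _ [_ [r ->] <-]; apply: measurableI => //.
apply: is_interval_measurable => a b /=; rewrite !in_itv/= !andbT => ha hb c /andP[ac cb].
rewrite /= in_itv/= andbT; apply: le_trans hb _; exact: ni.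
Qed.

Section rearr_props.
Context d (T : measurableType d) (R : realType) (mu : {measure set T -> \bar R})
  (D : set T) (g : T -> R).

Lemma rearr_ge0 t : 0 <= rearrangement mu D g t.
Proof.
by apply: le_ereal_inf_tmp => _ [s [s0 _] <-]; rewrite lee_fin.
Qed.

Lemma rearr_ni : nonincr (rearrangement mu D g).
Proof.
move=> a b ab; apply: ereal_inf_le_tmp => _ [s [s0 hs] <-]; exists s => //.
by split => //; apply: le_trans hs _; rewrite lee_fin.
Qed.

End rearr_props.
Section lvl.
Context {R : realType}.
Local Notation leb := (@lebesgue_measure R).

Lemma leb_cc (m : R) : (0 <= m)%R -> leb [set` `[0%R, m]] = m%:E.
Proof.
move=> m0; rewrite lebesgue_measure_itv/= lte_fin.
by case: ltgtP m0 => // [m0 _|<- _]; rewrite ?sube0 ?subrr.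
Qed.

Lemma leb_co (m : R) : (0 <= m)%R -> leb [set` `[0%R, m[] = m%:E.
Proof.
move=> m0; rewrite lebesgue_measure_itv/= lte_fin.
by case: ltgtP m0 => // [m0 _|<- _]; rewrite ?sube0 ?subrr.
Qed.

Lemma min_fin (t : R) (L : \bar R) : (0 <= t)%R -> 0 <= L ->
  exists m : R, mine t%:E L = m%:E /\ (0 <= m)%R /\ (m <= t)%R /\ m%:E <= L.
Proof.
move=> t0; case: L => [x| |] // x0.
- exists (Num.min t x); rewrite -EFin_min; split => //.
  rewrite le_min t0 -lee_fin x0 ge_min lexx/=; split => //; split => //.
  by rewrite lee_fin ge_min lexx orbT.
- by exists t; rewrite miney lexx t0 leey.
Qed.

Lemma lvl_meas (phi : R -> \bar R) (t sg : R) : nonincr phi ->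
  measurable ([set` `[0%R, t]] `&` [set s | sg%:E < phi s]).
Proof.
move=> ni; apply: measurableI => //.
by rewrite -[X in measurable X]setTI; apply: emeasurable_fun_o_infty => //; exact: nonincr_measurable.
Qed.

Lemma lvl_eq (phi : R -> \bar R) (t sg : R) : nonincr phi -> (0 <= t)%R ->
  leb ([set` `[0%R, t]] `&` [set s | sg%:E < phi s]) = mine t%:E (Lvl phi sg).
Proof.
move=> ni t0.
have [m [hm [m0 [mt mL]]]] := @min_fin t _ t0 (Lvl_ge0 phi sg).
rewrite hm; apply/eqP; rewrite eq_le; apply/andP; split.
- rewrite -(@leb_cc m m0); apply: (@le_measure _ _ _ leb); rewrite ?inE//; first exact: lvl_meas.
  move=> s [/=]; rewrite !in_itv/= => /andP[s0 st] hs; rewrite s0/= -lee_fin -hm.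
  by rewrite le_min lee_fin st Lvl_ub.
- rewrite -(@leb_co m m0); apply: (@le_measure _ _ _ leb); rewrite ?inE//; first exact: lvl_meas.
  move=> s hs; have := hs; rewrite /= in_itv/= => /andP[s0 sm]; split.
    by rewrite /= in_itv/= s0 (le_trans (ltW sm)).
  by apply: Lvl_lt => //; apply: lt_le_trans mL; rewrite lte_fin.
Qed.

End lvl.
Section layer_cake.
Context {R : realType}.
Local Notation leb := (@lebesgue_measure R).

Lemma layer_cake (phi : R -> \bar R) (t : R) : measurable_fun [set: R] phi ->
  (forall s, 0 <= phi s) ->
  \int[leb]_(s in `[0%R, t]) phi s =
  \int[leb]_(sg in `[0%R, +oo[) leb ([set` `[0%R, t]] `&` [set s | sg%:E < phi s]).
Proof.
move=> mphi phi0.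
pose E := [set p : R * R | p.1 \in `[0%R, t] /\ (0 <= p.2)%R /\ p.2%:E < phi p.1].
have mE : measurable E.
  have -> : E = (fst @^-1` [set` `[0%R, t]]) `&` (snd @^-1` [set` `[0%R, +oo[])
      `&` (setT `&` [set p | (fun p : R * R => p.2%:E) p < (fun p : R * R => phi p.1) p]).
    apply/seteqP; split => [[x y] /= [xt [y0 h]]|[x y] /= [[xt]]].
      by split; [split => //; rewrite /= in_itv/= andbT|split].
    by rewrite in_itv/= andbT => y0 [_ h].
  apply: measurableI; first apply: measurableI.
  - by rewrite -[X in measurable X]setTI; apply: measurable_fst.
  - by rewrite -[X in measurable X]setTI; apply: measurable_snd.
  - apply: measurable_lte => //.
      by apply: measurableT_comp => //; exact: measurable_snd.
    by apply: measurableT_comp => //; exact: measurable_fst.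
pose f := fun p : R * R => ((\1_E p : R)%:E : \bar R).
have mf : measurable_fun [set: R * R] f.
  by apply/measurable_EFinP; exact: measurable_indic.
have f0 p : 0 <= f p by rewrite lee_fin.
have := fubini_tonelli (m1 := leb) (m2 := leb) f mf f0.
have -> : \int[leb]_x \int[leb]_y f (x, y) = \int[leb]_(s in `[0%R, t]) phi s.
  rewrite [RHS]integral_mkcond; apply: eq_integral => s _.
  rewrite patchE.
  have -> : (fun y => f (s, y)) = (fun y => (\1_[set y | E (s, y)] y)%:E).
    by apply/funext => y; rewrite /f /indic /=.
  case: ifPn => st.
  - case E1 : (phi s) (phi0 s) => [x| |] // x0.
    + have -> : [set y | E (s, y)] = [set` `[0%R, x[].
        apply/seteqP; split => y /=; rewrite /E/= E1 lte_fin.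
          by case=> _ [y0 yx]; rewrite in_itv/= y0 yx.
        rewrite in_itv/= => /andP[y0 yx]; split => //.
        exact: (set_mem st).
      by rewrite integral_indic//= setIT leb_co.
    + have -> : [set y | E (s, y)] = [set` `[0%R, +oo[].
        apply/seteqP; split => y /=; rewrite /E/=.
          by case=> _ [y0 _]; rewrite in_itv/= y0.
        rewrite in_itv/= andbT => y0; split; last by split => //; rewrite E1 ltry.
        exact: (set_mem st).
      rewrite integral_indic//= setIT lebesgue_measure_itv/= ltry.
      by rewrite sube0.
  - have -> : [set y | E (s, y)] = set0.
      by apply/seteqP; split => y //= [h _]; apply: (negP st); apply: mem_set.
    by rewrite integral_indic//= set0I measure0.
move=> ->; rewrite [RHS]integral_mkcond; apply: eq_integral => sg _.
rewrite patchE.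
have -> : (fun x => f (x, sg)) = (fun x => (\1_[set x | E (x, sg)] x)%:E).
  by apply/funext => y; rewrite /f /indic /=.
have mA : measurable ([set` `[0%R, t]] `&` [set s | sg%:E < phi s]).
  apply: measurableI => //.
  by rewrite -[X in measurable X]setTI; apply: emeasurable_fun_o_infty.
case: ifPn => sg0.
- have -> : [set x | E (x, sg)] = [set` `[0%R, t]] `&` [set s | sg%:E < phi s].
    apply/seteqP; split => y /=; rewrite /E/=.
      by case=> yt [_ h].
    move: sg0; rewrite inE/= in_itv/= andbT => sg0 [yt h].
    by split => //; split.
  by rewrite integral_indic// setIT.
- have -> : [set x | E (x, sg)] = set0.
    apply/seteqP; split => y //= [_ [h _]]; apply: (negP sg0); apply: mem_set.
    by rewrite /= in_itv/= h.
  by rewrite integral_indic//= set0I measure0.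
Qed.

End layer_cake.

Section realmin.
Local Open Scope ring_scope.
Lemma min_add_real (R : realType) (t x y : R) : (0 <= t)%R -> (0 <= x)%R -> (0 <= y)%R ->
  (Num.min t (x + y) = Num.min t (Num.min t x + Num.min t y))%R.
Proof.
move=> t0 x0 y0.
have [tx|xt] := leP t x; have [ty|yt] := leP t y;
  have [h1|h1] := leP t (x + y);
  repeat (match goal with |- context [Num.min ?a ?b] => have [?|?] := leP a b end); lra.
Qed.


End realmin.

Section ehelpers.
Context {R : realType}.

Lemma mine_fine (t1 t : R) (A : \bar R) : (0 <= t1)%R -> (t1 <= t)%R -> 0 <= A ->
  mine t1%:E A = (Num.min t1 (fine (mine t%:E A)))%:E.
Proof.
move=> t10 t1t; case: A => [x| |] // x0.
- rewrite -!EFin_min /=; congr EFin.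
  have [h|h] := leP t x; first by rewrite (min_l (le_trans t1t h)) (min_l t1t).
  by [].
- by rewrite !miney /= (min_l t1t).
Qed.

Lemma mine_addfine (t : R) (A B : \bar R) : (0 <= t)%R -> 0 <= A -> 0 <= B ->
  mine t%:E (A + B) = (Num.min t (fine (mine t%:E A) + fine (mine t%:E B)))%:E.
Proof.
move=> t0; case: A => [x| |] // x0; case: B => [y| |] // y0.
- rewrite lee_fin in x0; rewrite lee_fin in y0.
  by rewrite -EFinD -!EFin_min /= -min_add_real.
- rewrite addey// !miney /= -EFin_min /= (@min_l _ _ t (_ + t)%R) //.
  by rewrite lerDr le_min t0.
- rewrite addye// !miney /= -EFin_min /= (@min_l _ _ t (t + _)%R) //.
  by rewrite lerDl le_min t0.
- by rewrite addye// !miney /= (@min_l _ _ t (t + t)%R)// lerDl.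
Qed.

End ehelpers.
Section oneD.
Context {R : realType}.
Local Notation leb := (@lebesgue_measure R).

Lemma Lvl_sub (k g h : R -> \bar R) : nonincr g -> nonincr h ->
  (forall a b : R, (0 <= a)%R -> (0 <= b)%R -> k (a + b)%R <= maxe (g a) (h b)) ->
  forall sg, Lvl k sg <= Lvl g sg + Lvl h sg.
Proof.
move=> nig nih hk sg; apply: ge_ereal_sup => _ [s [s0 hs] <-].
case: hs => [->|hs]; first by rewrite adde_ge0 ?Lvl_ge0.
rewrite leNgt; apply/negP => H.
have Lg0 := Lvl_ge0 g sg; have Lh0 := Lvl_ge0 h sg.
move: H; case Eg: (Lvl g sg) Lg0 => [x| |] // x0; case Eh: (Lvl h sg) Lh0 => [y| |] // y0.
rewrite lte_fin => H; rewrite lee_fin in x0; rewrite lee_fin in y0.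
pose e := ((s - x - y) / 2)%R.
have e0 : (0 < e)%R by rewrite /e; lra.
have ga : g (x + e)%R <= sg%:E.
  apply: Lvl_le; first by rewrite addr_ge0 // ltW.
  by rewrite Eg lte_fin ltrDl.
have hb : h (y + e)%R <= sg%:E.
  apply: Lvl_le; first by rewrite addr_ge0 // ltW.
  by rewrite Eh lte_fin ltrDl.
have se : ((x + e) + (y + e) = s)%R by rewrite /e; lra.
have := hk (x + e)%R (y + e)%R (addr_ge0 x0 (ltW e0)) (addr_ge0 y0 (ltW e0)).
rewrite se => hks.
have : k s <= sg%:E by apply: le_trans hks _; rewrite ge_max ga hb.
by rewrite leNgt hs.
Qed.

End oneD.

Section oneD2.
Context {R : realType}.
Local Notation leb := (@lebesgue_measure R).
Definition lvlf (phi : R -> \bar R) (t : R) := fun sg : R =>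
  leb ([set` `[0%R, t]] `&` [set s | sg%:E < phi s]).

Lemma lvl_ni phi t : nonincr phi -> nonincr (lvlf phi t).
Proof.
move=> ni a b ab; apply: (@le_measure _ _ _ leb); rewrite ?inE; try exact: lvl_meas.
move=> s [st hs]; split => //; apply: le_lt_trans hs; by rewrite lee_fin.
Qed.

Lemma lvl_mfun phi t : nonincr phi -> measurable_fun [set: R] (lvlf phi t).
Proof. by move=> ni; apply: nonincr_measurable; exact: lvl_ni. Qed.

Lemma lvl_ge phi (T sg : R) (M : \bar R) : nonincr phi -> (0 <= T)%R -> 0 <= M ->
  (forall s, (0 <= s)%R -> s%:E < M -> sg%:E < phi s) ->
  mine T%:E M <= lvlf phi T sg.
Proof.
move=> ni T0 M0 hM.
have [m [hm [m0 [mT mM]]]] := @min_fin R T M T0 M0.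
rewrite hm -(@leb_co R m m0); apply: (@le_measure _ _ _ leb); rewrite ?inE//; first exact: lvl_meas.
move=> s hs; have := hs; rewrite /= in_itv/= => /andP[s0 sm]; split.
  by rewrite /= in_itv/= s0 (le_trans (ltW sm)).
by apply: hM => //; apply: lt_le_trans mM; rewrite lte_fin.
Qed.

End oneD2.
Section oneD3.
Context {R : realType}.
Local Notation leb := (@lebesgue_measure R).

Lemma lc (phi : R -> \bar R) t : nonincr phi -> (forall s, 0 <= phi s) ->
  \int[leb]_(s in `[0%R, t]) phi s = \int[leb]_(sg in `[0%R, +oo[) lvlf phi t sg.
Proof. by move=> ni p0; rewrite layer_cake//; exact: nonincr_measurable. Qed.

Lemma concave_int (phi : R -> \bar R) (t1 t2 : R) : nonincr phi -> (forall s, 0 <= phi s) ->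
  (0 <= t1)%R -> (0 <= t2)%R ->
  \int[leb]_(s in `[0%R, t1]) phi s + \int[leb]_(s in `[0%R, t2]) phi s <=
  \int[leb]_(s in `[0%R, (t1 + t2)%R]) phi (s / 2)%R.
Proof.
move=> ni p0 t10 t20.
pose psi := fun s : R => phi (s / 2)%R.
have nipsi : nonincr psi by move=> a b ab; apply: ni; lra.
rewrite (lc phi t1 ni p0) (lc phi t2 ni p0) (lc psi (t1 + t2)%R nipsi (fun s => p0 _)).
rewrite -ge0_integralD//; try (by move=> x _; exact: measure_ge0);
  try (by apply: measurable_funTS; apply: lvl_mfun).
apply: ge0_le_integral => //.
- by move=> x _; apply: adde_ge0; exact: measure_ge0.
- by apply: emeasurable_funD; apply: measurable_funTS; apply: lvl_mfun.
- by apply: measurable_funTS; apply: lvl_mfun.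
move=> sg _; rewrite {1 2}/lvlf (@lvl_eq _ phi t1 sg ni t10) (@lvl_eq _ phi t2 sg ni t20).
have L0 := Lvl_ge0 phi sg.
apply: (le_trans _ (@lvl_ge _ psi (t1 + t2)%R sg (Lvl phi sg + Lvl phi sg) nipsi _ (adde_ge0 L0 L0) _)); last 2 first.
- by rewrite addr_ge0.
- move=> s s0 hs; apply: (@Lvl_lt _ phi (s / 2)%R sg ni); first lra.
  case: (Lvl phi sg) hs => [x|_|] //; [rewrite -EFinD !lte_fin; lra|by rewrite ltry].
case: (Lvl phi sg) L0 => [x| |] // x0.
- rewrite -EFinD -!EFin_min lee_fin le_min; apply/andP; split.
  + by apply: lerD; rewrite ge_min lexx.
  + by apply: lerD; rewrite ge_min lexx orbT.
- by rewrite !miney EFinD.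
Qed.

End oneD3.
Section oneD4.
Context {R : realType}.
Local Notation leb := (@lebesgue_measure R).

Lemma lu_props (g : R -> \bar R) (t : R) : nonincr g -> (0 <= t)%R ->
  (forall sg, 0 <= fine (mine t%:E (Lvl g sg)) <= t)%R /\
  (forall a b, a <= b -> fine (mine t%:E (Lvl g b)) <= fine (mine t%:E (Lvl g a)))%R.
Proof.
move=> ni t0.
have e sg : mine t%:E (Lvl g sg) = (fine (mine t%:E (Lvl g sg)))%:E /\
    (0 <= fine (mine t%:E (Lvl g sg)) <= t)%R.
  have [m [hm [m0 [mt _]]]] := @min_fin R t _ t0 (Lvl_ge0 g sg).
  by rewrite hm /= m0 mt.
split; first by move=> sg; case: (e sg).
move=> a b ab; rewrite -lee_fin -(proj1 (e a)) -(proj1 (e b)).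
by rewrite le_min ge_min lexx /= ge_min (@Lvl_ni R g a b ab) orbT.
Qed.

Lemma main1D (k g h : R -> \bar R) (t : R) : nonincr k -> nonincr g -> nonincr h ->
  (forall s, 0 <= k s) -> (forall s, 0 <= g s) -> (forall s, 0 <= h s) ->
  (forall a b : R, (0 <= a)%R -> (0 <= b)%R -> k (a + b)%R <= maxe (g a) (h b)) ->
  (0 <= t)%R ->
  exists t1 : R, (0 <= t1 <= t)%R /\
    \int[leb]_(s in `[0%R, t]) k s <=
    \int[leb]_(s in `[0%R, t1]) g s + \int[leb]_(s in `[0%R, (t - t1)%R]) h s.
Proof.
move=> nik nig nih k0 g0 h0 hk t0.
have [lu0 luni] := lu_props g t nig t0.
have [lv0 lvni] := lu_props h t nih t0.
have [t1 [/andP[t10 t1t] ht1]] := @real_split R t _ _ t0 lu0 lv0 luni lvni.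
exists t1; split; first by rewrite t10 t1t.
have tt1 : (0 <= t - t1)%R by rewrite subr_ge0.
rewrite (lc k t nik k0) (lc g t1 nig g0) (lc h (t - t1)%R nih h0).
rewrite -ge0_integralD//; try (by move=> x _; exact: measure_ge0);
  try (by apply: measurable_funTS; apply: lvl_mfun).
apply: ge0_le_integral => //; try (by move=> x _; exact: measure_ge0);
  try (by apply: measurable_funTS; apply: lvl_mfun);
  try (by apply: emeasurable_funD; apply: measurable_funTS; apply: lvl_mfun).
move=> sg _; rewrite /lvlf (@lvl_eq _ k t sg nik t0) (@lvl_eq _ g t1 sg nig t10).
rewrite (@lvl_eq _ h (t - t1)%R sg nih tt1).
apply: (@le_trans _ _ (mine t%:E (Lvl g sg + Lvl h sg))).
  by rewrite le_min ge_min lexx /= ge_min (@Lvl_sub R k g h nig nih hk sg) orbT.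
rewrite (@mine_addfine R t _ _ t0 (Lvl_ge0 g sg) (Lvl_ge0 h sg)).
rewrite (@mine_fine R t1 t _ t10 t1t (Lvl_ge0 g sg)).
rewrite (@mine_fine R (t - t1)%R t _ tt1 _ (Lvl_ge0 h sg)); last by rewrite gerBl.
by rewrite -EFinD lee_fin ht1.
Qed.

End oneD4.
Section measpart.
Context d (T : measurableType d) (R : realType) (mu : {measure set T -> \bar R}).

Lemma mlevel (g : T -> R) (s : R) : measurable_fun setT g ->
  measurable (setT `&` [set x | (s < `|g x|)%R]).
Proof.
move=> mg.
have mn : measurable_fun setT (fun x => `|g x|)%R.
  exact: (measurableT_comp (@normr_measurable R setT) mg).
have := mn measurableT _ (measurable_itv `]s, +oo[).
by rewrite preimage_itvoy.
Qed.

Lemma dist_ni (g : T -> R) (s1 s2 : R) : measurable_fun setT g -> (s1 <= s2)%R ->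
  Defs.distribution mu setT g s2 <= Defs.distribution mu setT g s1.
Proof.
move=> mg h; apply: (@le_measure _ _ _ mu); rewrite ?inE; try exact: mlevel.
by move=> x [_ hx]; split => //=; apply: le_lt_trans hx.
Qed.

Lemma dist_sub (u v : T -> R) : measurable_fun setT u -> measurable_fun setT v ->
  {ae mu, forall x, (0 <= u x)%R} -> {ae mu, forall x, (0 <= v x)%R} ->
  {ae mu, forall x, Num.min (u x) (v x) = 0%R} ->
  forall s : R, (0 <= s)%R ->
  Defs.distribution mu setT (u \+ v)%R s <= Defs.distribution mu setT u s + Defs.distribution mu setT v s.
Proof.
move=> mu_ mv hu hv hm s s0.
have : {ae mu, forall x, (0 <= u x)%R /\ (0 <= v x)%R /\ Num.min (u x) (v x) = 0%R}.
  by apply: filterS3 hu hv hm => x a b c.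
case=> N [mN N0 hN].
have muv : measurable_fun setT (u \+ v)%R by exact: measurable_funD.
rewrite /Defs.distribution.
apply: (@le_trans _ _ (mu ((setT `&` [set x | (s < `|u x|)%R]) `|`
   (setT `&` [set x | (s < `|v x|)%R]) `|` N))).
  apply: (@le_measure _ _ _ mu); rewrite ?inE; try exact: mlevel.
    by apply: measurableU => //; apply: measurableU; exact: mlevel.
  move=> x [_ hx]; have [Nx|Nx] := pselect (N x); first by right.
  left; have : ~ (~` [set x | (0 <= u x)%R /\ (0 <= v x)%R /\ Num.min (u x) (v x) = 0%R]) x.
    by move=> /hN.
  move=> /contrapT [u0 [v0 m0]].
  move: hx => /=.
  have [uv|vu] := leP (u x) (v x).
  - move: m0; rewrite (min_l uv) => u0'; rewrite u0' add0r => hx.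
    by right; split.
  - move: m0; rewrite (min_r (ltW vu)) => v0'; rewrite v0' addr0 => hx.
    by left; split.
apply: le_trans (measureU2 _ _ _) _ => //.
  by apply: measurableU; exact: mlevel.
rewrite [X in _ + X <= _](_ : _ = 0) ?adde0//; first by apply: measureU2; exact: mlevel.
Qed.

Lemma rearr_max (u v : T -> R) (a b : R) :
  measurable_fun setT u -> measurable_fun setT v ->
  (forall s : R, (0 <= s)%R ->
    Defs.distribution mu setT (u \+ v)%R s <= Defs.distribution mu setT u s + Defs.distribution mu setT v s) ->
  rearrangement mu setT (u \+ v)%R (a + b)%R <=
  maxe (rearrangement mu setT u a) (rearrangement mu setT v b).
Proof.
move=> mu_ mv dsub; rewrite leNgt; apply/negP => H.
have Hu : rearrangement mu setT u a < rearrangement mu setT (u \+ v)%R (a + b)%R.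
  by apply: le_lt_trans H; rewrite le_max lexx.
have Hv : rearrangement mu setT v b < rearrangement mu setT (u \+ v)%R (a + b)%R.
  by apply: le_lt_trans H; rewrite le_max lexx orbT.
have [_ [s1 [s10 hs1] <-] lt1] := ereal_inf_lt Hu.
have [_ [s2 [s20 hs2] <-] lt2] := ereal_inf_lt Hv.
have : rearrangement mu setT (u \+ v)%R (a + b)%R <= (Num.max s1 s2)%:E.
  apply: ereal_inf_lbound; exists (Num.max s1 s2) => //; split.
    by rewrite le_max s10.
  apply: le_trans (dsub _ _) _; first by rewrite le_max s10.
  rewrite EFinD; apply: leeD.
  - by apply: (le_trans _ hs1); apply: dist_ni => //; rewrite le_max lexx.
  - by apply: (le_trans _ hs2); apply: dist_ni => //; rewrite le_max lexx orbT.
rewrite leNgt => /negP; apply.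
by have [h12|h21] := leP s1 s2; [exact: lt2|exact: lt1].
Qed.

End measpart.
Theorem lemma2p1 (d : measure_display) (T : measurableType d) (R : realType)
  (mu : {measure set T -> \bar R}) (alpha : \bar R)
  (u v : T -> R) (f : R -> R) :
  sigma_finite setT mu -> atomless mu ->
  0 < alpha ->
  measurable_fun setT u -> measurable_fun setT v ->
  {ae mu, forall x, (0 <= u x)%R} -> {ae mu, forall x, (0 <= v x)%R} ->
  {ae mu, forall x, Num.min (u x) (v x) = 0%R} ->
  measurable_fun (`]0%R, +oo[ : set R) f ->
  {ae (@lebesgue_measure R), forall x, x \in `]0%R, +oo[ -> (0 <= f x)%R} ->
  (forall t : R, (0 <= t)%R -> t%:E < alpha ->
     \int[lebesgue_measure]_(s in `[0%R, t]) rearrangement mu setT u s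
     <= \int[lebesgue_measure]_(s in `[0%R, t])
          rearrangement lebesgue_measure (`]0%R, +oo[ : set R) f s) ->
  (forall t : R, (0 <= t)%R -> t%:E < alpha ->
     \int[lebesgue_measure]_(s in `[0%R, t]) rearrangement mu setT v s
     <= \int[lebesgue_measure]_(s in `[0%R, t])
          rearrangement lebesgue_measure (`]0%R, +oo[ : set R) f s) ->
  forall t : R, (0 <= t)%R -> t%:E < alpha ->
     \int[lebesgue_measure]_(s in `[0%R, t]) rearrangement mu setT (u \+ v)%R s
     <= \int[lebesgue_measure]_(s in `[0%R, t])
          rearrangement lebesgue_measure (`]0%R, +oo[ : set R) f (s / 2)%R.
Proof.
move=> _ _ _ mu_ mv hu hv hm _ _ Hu Hv t t0 ta.
set k := rearrangement mu setT (u \+ v)%R.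
set g := rearrangement mu setT u.
set h := rearrangement mu setT v.
set F := rearrangement lebesgue_measure (`]0%R, +oo[ : set R) f.
have dsub := @dist_sub _ _ _ mu u v mu_ mv hu hv hm.
have hk : forall a b : R, (0 <= a)%R -> (0 <= b)%R -> k (a + b)%R <= maxe (g a) (h b).
  by move=> a b _ _; exact: rearr_max.
have [t1 [/andP[t10 t1t] H]] := @main1D R k g h t (@rearr_ni _ _ _ mu _ _) (@rearr_ni _ _ _ mu _ _)
  (@rearr_ni _ _ _ mu _ _) (@rearr_ge0 _ _ _ mu _ _) (@rearr_ge0 _ _ _ mu _ _)
  (@rearr_ge0 _ _ _ mu _ _) hk t0.
apply: (le_trans H).
have tt1 : (0 <= t - t1)%R by rewrite subr_ge0.
apply: le_trans (leeD (Hu t1 t10 _) (Hv (t - t1)%R tt1 _)) _.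
- by apply: le_lt_trans ta; rewrite lee_fin.
- by apply: le_lt_trans ta; rewrite lee_fin gerBl.
have := @concave_int R F t1 (t - t1)%R (@rearr_ni _ _ _ lebesgue_measure (`]0%R, +oo[ : set R) f)
  (@rearr_ge0 _ _ _ lebesgue_measure _ f) t10 tt1.
by rewrite subrKC.
Qed.
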